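(* Let $E$ be a slim, semimodular diagram such that $c_\ell(E)$ is a coatom of $E$. Then the ideal ${\downarrow}c_\ell(E)=\{x\in E: x\le c_\ell(E)\}$ is a chain contained in $C_\ell(E)$; the set $E^{\circ}=E\setminus{\downarrow}c_\ell(E)$ is a sublattice of $E$ and (with the induced diagram) a slim, semimodular diagram with $|E^{\circ}|=|E|-\operatorname{length}(E)$; and $E^{\circ}$ determines $E$ up to similarity.
   Context: A slim, semimodular diagram is a planar Hasse diagram of a finite (upper) semimodular lattice whose set of join-irreducible elements contains no three-element antichain; diagrams are considered up to similarity (lattice isomorphism preserving left-to-right order of upper covers and of lower covers at every element). The left boundary chain $C_\ell(E)$ is the maximal chain from $0$ to $1$ forming the left boundary of the diagram. An element is doubly irreducible if it has at most one upper cover and at most one lower cover. $c_\ell(E)$ is the smallest doubly irreducible element of $C_\ell(E)$. $\operatorname{length}(E)$ is the length of the lattice (number of edges in a maximal chain). A coatom is an element covered by $1$. *)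

(* Defs.v *)
From mathcomp Require Import all_boot.
Set Implicit Arguments. Unset Strict Implicit. Unset Printing Implicit Defensive.

(* A planar lattice diagram, up to similarity, is encoded by its two
   linear orders "left-to-right" and "right-to-left" (Kelly--Rival): an
   element x of the finite carrier set E (inside a finite type T) is given
   two integer coordinates p1 x, p2 x, injective on E.  The lattice order is
   x <= y iff p1 x <= p1 y and p2 x <= p2 y (dominance drawing), and for
   incomparable x, y, "x is to the left of y" iff p1 x < p1 y (then
   p2 y < p2 x). *)

Section Diagrams.
Variables (T : finType) (p1 p2 : T -> nat).

Definition dle (x y : T) : bool := (p1 x <= p1 y) && (p2 x <= p2 y).
Definition dlt (x y : T) : bool := (x != y) && dle x y.
Definition dleft (x y : T) : bool := (p1 x < p1 y) && (p2 y < p2 x).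
Definition incomp (x y : T) : bool := ~~ dle x y && ~~ dle y x.

Definition dcovers (A : {set T}) (x y : T) : bool :=
  [&& x \in A, y \in A, dlt x y & [forall z in A, ~~ (dlt x z && dlt z y)]].

Definition is_join (A : {set T}) (x y z : T) : bool :=
  [&& z \in A, dle x z, dle y z & [forall w in A, (dle x w && dle y w) ==> dle z w]].
Definition is_meet (A : {set T}) (x y z : T) : bool :=
  [&& z \in A, dle z x, dle z y & [forall w in A, (dle w x && dle w y) ==> dle w z]].

Definition is_lattice (A : {set T}) : Prop :=
  A != set0 /\
  (forall x y, x \in A -> y \in A -> exists z, is_join A x y z) /\
  (forall x y, x \in A -> y \in A -> exists z, is_meet A x y z).

Definition is_diagram (A : {set T}) : Prop :=
  {in A &, injective p1} /\ {in A &, injective p2} /\ is_lattice A.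

Definition semimodular (A : {set T}) : Prop :=
  forall x y z u v, dcovers A x y -> z \in A ->
    is_join A x z u -> is_join A y z v -> u = v \/ dcovers A u v.

Definition lower_covers (A : {set T}) (x : T) := [set y in A | dcovers A y x].
Definition upper_covers (A : {set T}) (x : T) := [set y in A | dcovers A x y].

(* join-irreducible: exactly one lower cover (so 0 is not join-irreducible) *)
Definition join_irr (A : {set T}) (x : T) : bool :=
  (x \in A) && (#|lower_covers A x| == 1).

Definition slim (A : {set T}) : Prop :=
  forall x y z, join_irr A x -> join_irr A y -> join_irr A z ->
    incomp x y -> incomp y z -> incomp x z -> False.

Definition ssdiagram (A : {set T}) : Prop :=
  is_diagram A /\ slim A /\ semimodular A.

Definition left_boundary (A : {set T}) : {set T} :=
  [set x in A | [forall y in A, ~~ dleft y x]].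

Definition doubly_irr (A : {set T}) (x : T) : bool :=
  [&& x \in A, #|upper_covers A x| <= 1 & #|lower_covers A x| <= 1].

Definition is_cl (A : {set T}) (c : T) : Prop :=
  [/\ c \in left_boundary A, doubly_irr A c &
      forall d, d \in left_boundary A -> doubly_irr A d -> dle c d].

Definition is_top (A : {set T}) (t : T) : bool :=
  (t \in A) && [forall x in A, dle x t].
Definition coatom (A : {set T}) (c : T) : Prop :=
  exists t, is_top A t /\ dcovers A c t.

Definition ideal (A : {set T}) (c : T) : {set T} := [set x in A | dle x c].

Definition dchain (S : {set T}) : bool :=
  [forall x in S, forall y in S, dle x y || dle y x].

Definition dlength (A : {set T}) : nat :=
  (\max_(S : {set T} | (S \subset A) && dchain S) #|S|).-1.

Definition sublattice (A B : {set T}) : Prop :=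
  B \subset A /\
  forall x y z, x \in B -> y \in B ->
    (is_join A x y z -> z \in B) /\ (is_meet A x y z -> z \in B).

Definition circ (A : {set T}) (c : T) : {set T} := A :\: ideal A c.

End Diagrams.

(* similarity of diagrams: a bijection preserving both linear orders,
   i.e. a lattice isomorphism preserving the left-right relation *)
Definition similar (T T' : finType) (p1 p2 : T -> nat) (q1 q2 : T' -> nat)
    (A : {set T}) (B : {set T'}) : Prop :=
  exists f : T -> T',
    [/\ {in A &, injective f}, f @: A = B,
        {in A &, forall x y, (p1 x < p1 y) = (q1 (f x) < q1 (f y))} &
        {in A &, forall x y, (p2 x < p2 y) = (q2 (f x) < q2 (f y))}].

(* Main.v *)
Require Import Defs.
From mathcomp Require Import all_boot zify.
Set Implicit Arguments. Unset Strict Implicit. Unset Printing Implicit Defensive.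

Section Basics.
Variables (T : finType) (p1 p2 : T -> nat).
Local Notation le := (dle p1 p2).
Local Notation lt := (dlt p1 p2).

Lemma ex_minP (P : pred T) (F : T -> nat) x0 : P x0 ->
  exists2 x, P x & forall y, P y -> F x <= F y.
Proof. move=> P0; case: (arg_minnP F P0) => x Px H; by exists x. Qed.

Lemma ex_maxP (P : pred T) (F : T -> nat) x0 : P x0 ->
  exists2 x, P x & forall y, P y -> F y <= F x.
Proof. move=> P0; case: (arg_maxnP F P0) => x Px H; by exists x. Qed.

Lemma le_refl x : le x x.
Proof. by rewrite /dle !leqnn. Qed.

Lemma le_trans y x z : le x y -> le y z -> le x z.
Proof. rewrite /dle => /andP[a b] /andP[c d]; apply/andP; split; lia. Qed.

Lemma leP1 x y : le x y -> p1 x <= p1 y. Proof. by case/andP. Qed.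
Lemma leP2 x y : le x y -> p2 x <= p2 y. Proof. by case/andP. Qed.

Variable A : {set T}.
Hypothesis i1 : {in A &, injective p1}.
Hypothesis i2 : {in A &, injective p2}.

Lemma le_anti x y : x \in A -> y \in A -> le x y -> le y x -> x = y.
Proof. move=> xA yA /leP1 a /leP1 b; apply: i1 => //; lia. Qed.

Lemma ltP1 x y : x \in A -> y \in A -> lt x y -> p1 x < p1 y.
Proof.
move=> xA yA /andP[nxy /leP1 h]; rewrite ltn_neqAle h andbT.
by apply/eqP => /i1 E; move/eqP: nxy; apply; apply: E.
Qed.

Lemma ltP2 x y : x \in A -> y \in A -> lt x y -> p2 x < p2 y.
Proof.
move=> xA yA /andP[nxy /leP2 h]; rewrite ltn_neqAle h andbT.
by apply/eqP => /i2 E; move/eqP: nxy; apply; apply: E.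
Qed.

Lemma lt_le x y : lt x y -> le x y. Proof. by case/andP. Qed.
Lemma lt_neq x y : lt x y -> x != y. Proof. by case/andP. Qed.

Lemma lt_irr x : lt x x = false.
Proof. by rewrite /dlt eqxx. Qed.

Lemma le_lt_trans y x z : x \in A -> y \in A -> z \in A -> le x y -> lt y z -> lt x z.
Proof.
move=> xA yA zA a /andP[b c]; apply/andP; split; last exact: le_trans c.
apply/eqP=> E; subst z; move/eqP: b; apply; exact: le_anti.
Qed.

Lemma lt_le_trans y x z : x \in A -> y \in A -> z \in A -> lt x y -> le y z -> lt x z.
Proof.
move=> xA yA zA /andP[b a] c; apply/andP; split; last exact: le_trans c.
apply/eqP=> E; subst z; move/eqP: b; apply; exact: le_anti.
Qed.

Lemma lt_trans y x z : x \in A -> y \in A -> z \in A -> lt x y -> lt y z -> lt x z.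
Proof. by move=> xA yA zA a /lt_le; apply: lt_le_trans. Qed.

Lemma lt_asym x y : x \in A -> y \in A -> lt x y -> le y x -> False.
Proof. move=> xA yA /ltP1 a /leP1 b; have := a xA yA; lia. Qed.

Lemma le_ltP x y : x \in A -> y \in A -> le x y -> x = y \/ lt x y.
Proof. move=> xA yA h; case: (eqVneq x y) => [->|n]; [by left|right; exact/andP]. Qed.

Lemma incomp_left x y : x \in A -> y \in A -> ~~ le x y -> ~~ le y x ->
  dleft p1 p2 x y || dleft p1 p2 y x.
Proof.
move=> xA yA nxy nyx; have nE : p1 x != p1 y.
  by apply/eqP => /i1 E; move: nxy; rewrite E // le_refl.
move: nxy nyx nE; rewrite /dle /dleft; lia.
Qed.

Lemma lb_in x : x \in left_boundary p1 p2 A -> x \in A.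
Proof. by rewrite inE => /andP[]. Qed.

Lemma lb_noleft x y : x \in left_boundary p1 p2 A -> y \in A -> dleft p1 p2 y x = false.
Proof. by rewrite inE => /andP[_ /forall_inP H] yA; apply/negbTE/H. Qed.

Lemma lb_right u w : u \in left_boundary p1 p2 A -> w \in A -> ~~ le u w -> ~~ le w u ->
  p1 u < p1 w /\ p2 w < p2 u.
Proof.
move=> uL wA a b; have := incomp_left (lb_in uL) wA a b.
rewrite (lb_noleft uL wA) orbF /dleft => /andP[]; by [].
Qed.

Lemma lb_chain x y : x \in left_boundary p1 p2 A -> y \in left_boundary p1 p2 A ->
  le x y || le y x.
Proof.
move=> xL yL; case: (boolP (le x y)) => //= a; apply/negPn/negP => b.
have := incomp_left (lb_in xL) (lb_in yL) a b.
by rewrite (lb_noleft xL (lb_in yL)) (lb_noleft yL (lb_in xL)).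
Qed.

Lemma dcoversP x y : dcovers p1 p2 A x y ->
  [/\ x \in A, y \in A, lt x y & forall z, z \in A -> lt x z -> lt z y -> False].
Proof.
case/and4P=> xA yA l /forall_inP H; split=> // z zA a b.
by have := H z zA; rewrite a b.
Qed.

Lemma dcoversI x y : x \in A -> y \in A -> lt x y ->
  (forall z, z \in A -> lt x z -> lt z y -> False) -> dcovers p1 p2 A x y.
Proof.
move=> xA yA l H; apply/and4P; split=> //; apply/forall_inP => z zA.
by apply/negP => /andP[a b]; apply: H a b.
Qed.

Lemma lower_cover_above x y : x \in A -> y \in A -> lt x y ->
  exists z, dcovers p1 p2 A z y /\ le x z.
Proof.
move=> xA yA lxy.
have P0 : [&& x \in A, le x x & lt x y] by rewrite xA le_refl.
case: (@ex_maxP (fun z => [&& z \in A, le x z & lt z y]) p1 x P0) => z /and3P[zA xz zy] M.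
exists z; split=> //; apply: dcoversI => // w wA zw wy.
have := M w; rewrite wA (le_trans xz (lt_le zw)) wy => /(_ isT).
by have := ltP1 zA wA zw; lia.
Qed.

Lemma upper_cover_below x y : x \in A -> y \in A -> lt x y ->
  exists z, dcovers p1 p2 A x z /\ le z y.
Proof.
move=> xA yA lxy.
have P0 : [&& y \in A, lt x y & le y y] by rewrite yA lxy le_refl.
case: (@ex_minP (fun z => [&& z \in A, lt x z & le z y]) p1 y P0) => z /and3P[zA xz zy] M.
exists z; split=> //; apply: dcoversI => // w wA xw wz.
have := M w; rewrite wA xw (le_trans (lt_le wz) zy) => /(_ isT).
by have := ltP1 wA zA wz; lia.
Qed.

Lemma covers_eq x y y' : dcovers p1 p2 A x y -> dcovers p1 p2 A x y' -> le y y' -> y = y'.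
Proof.
case/dcoversP=> xA yA xy H /dcoversP[_ y'A xy' H'] yy'.
case: (le_ltP yA y'A yy') => // l; exfalso; exact: H' y yA xy l.
Qed.

Lemma covers_eq_low x x' y : dcovers p1 p2 A x y -> dcovers p1 p2 A x' y -> le x x' -> x = x'.
Proof.
case/dcoversP=> xA yA xy H /dcoversP[x'A _ x'y _] xx'.
case: (le_ltP xA x'A xx') => // l; exfalso; exact: H x' x'A l x'y.
Qed.


Lemma lb_lower y z : y \in left_boundary p1 p2 A -> dcovers p1 p2 A z y ->
  exists a, dcovers p1 p2 A a y /\ a \in left_boundary p1 p2 A.
Proof.
move=> yL zy.
case: (@ex_minP (fun a => dcovers p1 p2 A a y) p1 z zy) => a ay M.
exists a; split => //.
have [aA yA ay' Ha] := dcoversP ay.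
rewrite inE aA /=; apply/forall_inP => w wA; apply/negP => /andP[w1 w2].
have ayp := ltP1 aA yA ay'.
case: (boolP (le y w)) => [/leP1|nyw]; first lia.
case: (boolP (le w y)) => [wy|nwy]; last first.
  by have [] := lb_right yL wA nyw nwy; lia.
have wy' : lt w y.
  apply/andP; split => //; apply/eqP => E; subst w; lia.
have [a' [a'y wa']] := lower_cover_above wA yA wy'.
have [a'A _ a'y' _] := dcoversP a'y.
have := M a' a'y => m.
case: (eqVneq a' a) => [E|na].
  by subst a'; move/leP2: wa'; lia.
have na1 : p1 a' != p1 a by apply/eqP => /i1 E; move/eqP: na; apply; exact: E.
have laa' : lt a a'.
  apply/andP; split; first by rewrite eq_sym.
  by move/leP2: wa' => h; apply/andP; split; [exact: m | exact: leq_trans (ltnW w2) h].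
exact: Ha a' a'A laa' a'y'.
Qed.

Lemma lowerP x y : (y \in lower_covers p1 p2 A x) = dcovers p1 p2 A y x.
Proof. rewrite inE; apply/andP/idP => [[]//|h]; split=> //; by case/dcoversP: h. Qed.

End Basics.
Section Lat.
Variables (T : finType) (p1 p2 : T -> nat).
Local Notation le := (dle p1 p2).
Local Notation lt := (dlt p1 p2).
Variable A : {set T}.
Hypothesis i1 : {in A &, injective p1}.
Hypothesis i2 : {in A &, injective p2}.
Hypothesis hL : is_lattice p1 p2 A.

Lemma joinP x y z : is_join p1 p2 A x y z ->
  [/\ z \in A, le x z, le y z & forall w, w \in A -> le x w -> le y w -> le z w].
Proof.
case/and4P=> zA a b /forall_inP H; split=> // w wA c d.
by have := H w wA; rewrite c d.
Qed.

Lemma joinI x y z : z \in A -> le x z -> le y z ->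
  (forall w, w \in A -> le x w -> le y w -> le z w) -> is_join p1 p2 A x y z.
Proof.
move=> zA a b H; apply/and4P; split=> //; apply/forall_inP => w wA.
by apply/implyP => /andP[]; apply: H.
Qed.

Lemma meetP x y z : is_meet p1 p2 A x y z ->
  [/\ z \in A, le z x, le z y & forall w, w \in A -> le w x -> le w y -> le w z].
Proof.
case/and4P=> zA a b /forall_inP H; split=> // w wA c d.
by have := H w wA; rewrite c d.
Qed.

Lemma meetI x y z : z \in A -> le z x -> le z y ->
  (forall w, w \in A -> le w x -> le w y -> le w z) -> is_meet p1 p2 A x y z.
Proof.
move=> zA a b H; apply/and4P; split=> //; apply/forall_inP => w wA.
by apply/implyP => /andP[]; apply: H.
Qed.

Lemma join_ex x y : x \in A -> y \in A -> exists z, is_join p1 p2 A x y z.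
Proof. by case: hL => _ [H _]; apply: H. Qed.

Lemma meet_ex x y : x \in A -> y \in A -> exists z, is_meet p1 p2 A x y z.
Proof. by case: hL => _ [_ H]; apply: H. Qed.

Lemma join_le x y : le x y -> y \in A -> is_join p1 p2 A x y y.
Proof. move=> xy yA; apply: joinI => //; exact: le_refl. Qed.

Lemma join_uniq x y z z' : is_join p1 p2 A x y z -> is_join p1 p2 A x y z' -> z = z'.
Proof.
case/joinP=> zA a b H /joinP[z'A a' b' H'].
by apply: (le_anti i1) => //; [apply: H | apply: H'].
Qed.

Lemma bot_ex : exists2 b, b \in A & forall x, x \in A -> le b x.
Proof.
case: hL => /set0Pn[x0 x0A] _.
case: (@ex_minP _ (fun b => b \in A) p1 x0 x0A) => b bA M.
exists b => // x xA; have [m /meetP[mA mb mx _]] := meet_ex bA xA.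
have := M m mA => h; have E : m = b by apply: i1 => //; move/leP1: mb; lia.
by rewrite -E.
Qed.

Lemma lower_covers_join a b y : dcovers p1 p2 A a y -> dcovers p1 p2 A b y -> a != b ->
  forall w, w \in A -> le a w -> le b w -> le y w.
Proof.
move=> ay by_ nab w wA aw bw.
have [aA yA ay' Ha] := dcoversP ay.
have [bA _ by' _] := dcoversP by_.
have [j /joinP[jA aj bj Hj]] := join_ex aA bA.
have jy : le j y by apply: Hj => //; exact: lt_le.
have jw : le j w by apply: Hj.
case: (le_ltP jA yA jy) => [<-//|jy'].
case: (le_ltP aA jA aj) => [E|aj']; last by exfalso; exact: Ha aj' jy'.
subst j; have := covers_eq_low by_ ay bj => E; by rewrite E eqxx in nab.
Qed.

End Lat.

Section Semi.
Variables (T : finType) (p1 p2 : T -> nat).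
Local Notation le := (dle p1 p2).
Local Notation lt := (dlt p1 p2).
Variable A : {set T}.
Hypothesis i1 : {in A &, injective p1}.
Hypothesis i2 : {in A &, injective p2}.
Hypothesis hL : is_lattice p1 p2 A.
Hypothesis hS : semimodular p1 p2 A.

Lemma sm_step x y z v : dcovers p1 p2 A x y -> z \in A -> le x z ->
  is_join p1 p2 A y z v -> z = v \/ dcovers p1 p2 A z v.
Proof.
move=> xy zA xz yzv; apply: (hS xy zA _ yzv).
by rewrite /is_join; apply: join_le.
Qed.

Lemma sm_cov a b c e : dcovers p1 p2 A a b -> dcovers p1 p2 A a c -> b != c ->
  is_join p1 p2 A b c e -> dcovers p1 p2 A b e.
Proof.
move=> ab ac nbc bce.
have [aA bA ab' _] := dcoversP ab.
have [_ cA ac' _] := dcoversP ac.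
have cbe : is_join p1 p2 A c b e.
  by case/joinP: bce => eA u v H; apply: joinI => // w wA p q; apply: H.
case: (sm_step ac bA (lt_le ab') cbe) => // E; subst e.
case/joinP: bce => _ _ cb _.
by have := covers_eq ac ab cb => E; rewrite E eqxx in nbc.
Qed.

End Semi.
Section JD.
Variables (T : finType) (p1 p2 : T -> nat).
Local Notation le := (dle p1 p2).
Local Notation lt := (dlt p1 p2).
Variable A : {set T}.
Hypothesis i1 : {in A &, injective p1}.
Hypothesis i2 : {in A &, injective p2}.
Hypothesis hL : is_lattice p1 p2 A.
Hypothesis hS : semimodular p1 p2 A.
Local Notation cov := (dcovers p1 p2 A).

Lemma cpath_lastA a s : a \in A -> path cov a s -> last a s \in A.
Proof.
elim: s a => //= x s IH a aA /andP[ax ps].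
have [_ xA _ _] := dcoversP ax; exact: IH.
Qed.

Lemma cpath_lt a s : a \in A -> path cov a s -> s != [::] -> lt a (last a s).
Proof.
elim: s a => //= x s IH a aA /andP[ax ps] _.
have [_ xA axl _] := dcoversP ax.
case: s IH ps => [//|y s] IH ps.
have := IH x xA ps isT => xl.
exact: (lt_trans i1 aA xA (cpath_lastA xA ps) axl xl).
Qed.

Lemma cpath_le a s : a \in A -> path cov a s -> le a (last a s).
Proof.
move=> aA ps; case: (eqVneq s [::]) => [->|ns]; first exact: le_refl.
exact: lt_le (cpath_lt aA ps ns).
Qed.

Definition upset a := [set x in A | le a x].

Lemma upset_proper a z : a \in A -> z \in A -> lt a z -> upset z \proper upset a.
Proof.
move=> aA zA az; apply/properP; split.
  apply/subsetP => x; rewrite !inE => /andP[xA zx]; rewrite xA /=.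
  exact: le_trans (lt_le az) zx.
exists a; first by rewrite inE aA le_refl.
rewrite inE aA /=; apply/negP => za.
exact: (@lt_asym _ p1 p2 A i1 a z aA zA az za).
Qed.

Lemma cpath_ex a b : a \in A -> b \in A -> le a b ->
  exists2 s, path cov a s & last a s = b.
Proof.
move: {2}#|upset a|.+1 (ltnSn #|upset a|) => n.
elim: n a => // n IH a lt_n aA bA ab.
case: (le_ltP aA bA ab) => [<-|ab']; first by exists [::].
have [z [az zb]] := upper_cover_below i1 aA bA ab'.
have [_ zA az' _] := dcoversP az.
have := proper_card (upset_proper aA zA az') => h.
have [s ps ls] := IH z (leq_trans h lt_n) zA bA zb.
by exists (z :: s) => //=; rewrite az.
Qed.

Lemma jd_aux n a s1 s2 : #|upset a| < n -> a \in A -> path cov a s1 -> path cov a s2 ->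
  last a s1 = last a s2 -> size s1 = size s2.
Proof.
elim: n a s1 s2 => // n IH a s1 s2 lt_n aA.
case: s1 => [|c s1]; case: s2 => [|d s2] // ps1 ps2 E.
- by move: E (cpath_lt aA ps2 isT) => /= <-; rewrite lt_irr.
- by move: E (cpath_lt aA ps1 isT) => /= ->; rewrite lt_irr.
move: ps1 ps2 E => /= /andP[ac ps1] /andP[ad ps2] E.
have [_ cA acl _] := dcoversP ac.
have [_ dA adl _] := dcoversP ad.
have mc := leq_trans (proper_card (upset_proper aA cA acl)) lt_n.
have md := leq_trans (proper_card (upset_proper aA dA adl)) lt_n.
case: (eqVneq c d) => [cd|ncd].
  by subst d; congr S; apply: (IH c) => //.
have [e ce] := join_ex hL cA dA.
have ceC : cov c e by apply: (sm_cov hS ac ad).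
have deC : cov d e.
  apply: (sm_cov hS ad ac); first by rewrite eq_sym.
  by case/joinP: ce => eA u v H; apply: joinI => // w wA p q; apply: H.
have [_ eA _ _] := dcoversP ceC.
set b := last c s1.
have bA : b \in A by exact: cpath_lastA cA ps1.
have eb : le e b.
  case/joinP: ce => _ _ _ H; apply: H => //; first exact: cpath_le.
  by rewrite /b E; exact: cpath_le.
have [F pF lF] := cpath_ex eA bA eb.
have h1 : size s1 = size (e :: F).
  apply: (IH c s1 (e::F) mc cA ps1); first by rewrite /= ceC pF.
  by rewrite /= lF.
have h2 : size s2 = size (e :: F).
  apply: (IH d s2 (e::F) md dA ps2); first by rewrite /= deC pF.
  by rewrite /= lF /b E.
by rewrite h1 h2.
Qed.

Lemma jd a s1 s2 : a \in A -> path cov a s1 -> path cov a s2 ->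
  last a s1 = last a s2 -> size s1 = size s2.
Proof. exact: (@jd_aux #|upset a|.+1). Qed.

End JD.
Section Chains.
Variables (T : finType) (p1 p2 : T -> nat).
Local Notation le := (dle p1 p2).
Local Notation lt := (dlt p1 p2).
Variable A : {set T}.
Hypothesis i1 : {in A &, injective p1}.
Hypothesis i2 : {in A &, injective p2}.
Hypothesis hL : is_lattice p1 p2 A.
Hypothesis hS : semimodular p1 p2 A.
Local Notation cov := (dcovers p1 p2 A).

Lemma dchainP (S : {set T}) : dchain p1 p2 S -> forall x y, x \in S -> y \in S -> le x y || le y x.
Proof. move=> /forall_inP H x y xS yS; exact: (forall_inP (H x xS)). Qed.

Lemma dchainI (S : {set T}) : (forall x y, x \in S -> y \in S -> le x y || le y x) -> dchain p1 p2 S.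
Proof. by move=> H; apply/forall_inP => x xS; apply/forall_inP => y yS; apply: H. Qed.

Lemma dchain_sub (S S' : {set T}) : S' \subset S -> dchain p1 p2 S -> dchain p1 p2 S'.
Proof.
move=> /subsetP sub ch; apply: dchainI => x y xS yS.
by apply: (dchainP ch); apply: sub.
Qed.

Lemma chain_max (S : {set T}) y : S \subset A -> dchain p1 p2 S -> y \in S ->
  (forall x, x \in S -> p1 x <= p1 y) -> forall x, x \in S -> le x y.
Proof.
move=> /subsetP SA ch yS My x xS.
case/orP: (dchainP ch xS yS) => // yx.
have E : x = y by apply: i1; [exact: SA | exact: SA | move/leP1: yx (My x xS); lia].
by rewrite E le_refl.
Qed.

Lemma arith1 u v w x : u <= v.+1 -> 0 < w -> u.+1 <= (v + (w + x)).+1.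
Proof. lia. Qed.

Lemma chain_bound n (S : {set T}) a s : #|S| < n -> S \subset A -> dchain p1 p2 S ->
  a \in A -> path cov a s ->
  (forall x, x \in S -> le a x && le x (last a s)) -> #|S| <= (size s).+1.
Proof.
elim: n S a s => // n IH S a s ltn SA ch aA ps bnd.
case: (set_0Vmem S) => [->|[y0 y0S]]; first by rewrite cards0.
have [y yS My] := @ex_maxP _ (fun x => x \in S) p1 y0 y0S.
set S' := S :\ y.
have cS : #|S| = #|S'|.+1 by rewrite (cardsD1 y S) yS.
case: (set_0Vmem S') => [E|[z0 z0S]]; first by rewrite cS E cards0.
have [y' y'S My'] := @ex_maxP _ (fun x => x \in S') p1 z0 z0S.
have S'S : S' \subset S by apply: subsetDl.
have ch' : dchain p1 p2 S' by exact: dchain_sub ch.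
have S'A : S' \subset A by exact: subset_trans SA.
have Sle := chain_max SA ch yS My.
have S'le := chain_max S'A ch' y'S My'.
move: (y'S); rewrite inE => /andP[ny' y'S0].
have yA : y \in A by apply: (subsetP SA).
have y'A : y' \in A by apply: (subsetP SA).
set b := last a s.
have bA : b \in A by exact: cpath_lastA aA ps.
have ay' : le a y' by case/andP: (bnd y' y'S0).
have yb : le y b by case/andP: (bnd y yS).
have [s1 ps1 l1] := cpath_ex i1 aA y'A ay'.
have [s2 ps2 l2] := cpath_ex i1 y'A yA (Sle y' y'S0).
have [s3 ps3 l3] := cpath_ex i1 yA bA yb.
have h1 : #|S'| <= (size s1).+1.
  apply: (IH S' a s1) => //; first by rewrite -cS.
  move=> x xS; rewrite l1 S'le // andbT.
  by case/andP: (bnd x (subsetP S'S x xS)).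
have h2 : 0 < size s2.
  by case: s2 ps2 l2 => [|? ?] //= _ E; move: ny'; rewrite E inE eqxx.
have pc : path cov a (s1 ++ s2 ++ s3).
  by rewrite !cat_path ps1 l1 ps2 l2 ps3.
have lc : last a (s1 ++ s2 ++ s3) = b by rewrite !last_cat l1 l2 l3.
have := jd i1 hL hS aA ps pc (esym lc); rewrite !size_cat => E.
rewrite cS E; exact: arith1.
Qed.

End Chains.
Section Main.
Variables (T : finType) (p1 p2 : T -> nat).
Local Notation le := (dle p1 p2).
Local Notation lt := (dlt p1 p2).
Variable E : {set T}.
Hypothesis i1 : {in E &, injective p1}.
Hypothesis i2 : {in E &, injective p2}.
Hypothesis hL : is_lattice p1 p2 E.
Hypothesis hsl : slim p1 p2 E.
Hypothesis hS : semimodular p1 p2 E.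
Variables (c t : T).
Hypothesis cL : c \in left_boundary p1 p2 E.
Hypothesis cdi : doubly_irr p1 p2 E c.
Hypothesis cmin : forall d, d \in left_boundary p1 p2 E -> doubly_irr p1 p2 E d -> le c d.
Hypothesis ht : is_top p1 p2 E t.
Hypothesis hct : dcovers p1 p2 E c t.
Local Notation cov := (dcovers p1 p2 E).
Local Notation lb := (left_boundary p1 p2 E).
Local Notation I := (ideal p1 p2 E c).
Local Notation Ec := (circ p1 p2 E c).

Lemma cE : c \in E. Proof. exact: lb_in cL. Qed.
Lemma tE : t \in E. Proof. by case/andP: ht. Qed.
Lemma le_t x : x \in E -> le x t. Proof. by case/andP: ht => _ /forall_inP; apply. Qed.

Lemma inI x : (x \in I) = (x \in E) && le x c. Proof. by rewrite inE. Qed.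
Lemma inEc x : (x \in Ec) = (x \in E) && ~~ le x c.
Proof. by rewrite !inE; case: (x \in E); rewrite ?andbF ?andbT. Qed.

Lemma EcE x : x \in Ec -> x \in E. Proof. by rewrite inEc => /andP[]. Qed.
Lemma IE x : x \in I -> x \in E. Proof. by rewrite inI => /andP[]. Qed.
Lemma Ic x : x \in I -> le x c. Proof. by rewrite inI => /andP[]. Qed.
Lemma EcNc x : x \in Ec -> ~~ le x c. Proof. by rewrite inEc => /andP[]. Qed.
Lemma EcNI x : x \in Ec -> x \in I -> False.
Proof. by move=> /EcNc h /Ic h'; rewrite h' in h. Qed.
Lemma EcVI x : x \in E -> (x \in I) || (x \in Ec).
Proof. by move=> xE; rewrite inI inEc xE /=; case: (le x c). Qed.

Lemma Ec_up y z : y \in Ec -> z \in E -> le y z -> z \in Ec.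
Proof.
move=> yEc zE yz; rewrite inEc zE /=; apply/negP => zc.
by have := EcNc yEc; rewrite (le_trans yz zc).
Qed.

Lemma tEc : t \in Ec.
Proof.
rewrite inEc tE /=; apply/negP => tc.
have [_ _ ct _] := dcoversP hct.
exact: (lt_asym i1 cE tE ct tc).
Qed.

Lemma c_le_Ec y : y \in Ec -> le c y -> y = t.
Proof.
move=> yEc cy; have yE := EcE yEc.
have [_ _ ct H] := dcoversP hct.
case: (le_ltP cE yE cy) => [E0|cy'].
  by subst y; move: (EcNc yEc); rewrite le_refl.
case: (le_ltP yE tE (le_t yE)) => // yt; exfalso; exact: H cy' yt.
Qed.

Lemma le1_eq (S : {set T}) : #|S| <= 1 -> forall a b, a \in S -> b \in S -> a = b.
Proof. by move/card_le1_eqP => H a b aS bS; apply: H. Qed.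

Lemma le1_intro (S : {set T}) : (forall a b, a \in S -> b \in S -> a = b) -> #|S| <= 1.
Proof. by move=> H; apply/card_le1_eqP => a b aS bS; apply: H. Qed.

Lemma lcP x y : (y \in lower_covers p1 p2 E x) = cov y x.
Proof. rewrite inE; apply/andP/idP => [[]//|h]; split=> //; by case/dcoversP: h. Qed.
Lemma ucP x y : (y \in upper_covers p1 p2 E x) = cov x y.
Proof. rewrite inE; apply/andP/idP => [[]//|h]; split=> //; by case/dcoversP: h. Qed.

Lemma ji_intro x z : x \in E -> cov z x -> (forall a b, cov a x -> cov b x -> a = b) ->
  join_irr p1 p2 E x.
Proof.
move=> xE zx H; rewrite /join_irr xE /= eqn_leq; apply/andP; split.
  by apply: le1_intro => a b; rewrite !lcP; apply: H.
by apply/card_gt0P; exists z; rewrite lcP.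
Qed.

Lemma low1_aux n y : p1 y < n -> y \in lb -> le y c -> #|lower_covers p1 p2 E y| <= 1.
Proof.
elim: n y => // n IH y lyn yL yc.
rewrite leqNgt; apply/negP => /card_gt1P [a0 [b0 [a0in b0in nab]]].
rewrite lcP in a0in; rewrite lcP in b0in.
have [a [acov aL]] := lb_lower i1 yL a0in.
have [b [bcov nba]] : exists b, cov b y /\ b != a.
  case: (eqVneq a0 a) => [E0|n0]; last by exists a0.
  by exists b0; split => //; apply/eqP => E1; move/eqP: nab; apply; rewrite E0 E1.
have [aE yE ay _] := dcoversP acov.
have [bE _ by_ _] := dcoversP bcov.
have yE' := yE.
have H : forall a', cov a a' -> a' = y.
  move=> a' aa'; case: (eqVneq a' y) => // na'.
  have [_ a'E _ _] := dcoversP aa'.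
  have n1 : ~~ le a' y by apply/negP => h; move/eqP: na'; apply; exact: covers_eq aa' acov h.
  have n2 : ~~ le y a' by apply/negP => h; move/eqP: na'; apply; apply/esym; exact: covers_eq acov aa' h.
  have [r1 r2] := lb_right i1 yL a'E n2 n1.
  have n3 : ~~ le a b by apply/negP => h; move/eqP: nba; apply; apply/esym; exact: covers_eq_low acov bcov h.
  have n4 : ~~ le b a by apply/negP => h; move/eqP: nba; apply; exact: covers_eq_low bcov acov h.
  have [r3 r4] := lb_right i1 aL bE n3 n4.
  have [_ _ aa'l _] := dcoversP aa'.
  have ba' : le b a'.
    apply/andP; split.
      exact: leq_trans (leP1 (lt_le by_)) (ltnW r1).
    exact: leq_trans (ltnW r4) (leP2 (lt_le aa'l)).
  have := lower_covers_join hL acov bcov (negbT (introF eqP (fun E0 => (negP nba) (introT eqP (esym E0))))) a'E (lt_le aa'l) ba'.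
  by move=> h; move: n2; rewrite h.
have up1 : #|upper_covers p1 p2 E a| <= 1.
  by apply: le1_intro => u v; rewrite !ucP => /H -> /H ->.
have ac : le a c := le_trans (lt_le ay) yc.
have pa : p1 a < n := leq_trans (ltP1 i1 aE yE ay) lyn.
have low1 := IH a pa aL ac.
have dia : doubly_irr p1 p2 E a by rewrite /doubly_irr aE up1 low1.
have ca := cmin aL dia.
exact: (lt_asym i1 aE cE (lt_le_trans i1 aE yE cE ay yc) ca).
Qed.

Lemma low1 y : y \in lb -> le y c -> #|lower_covers p1 p2 E y| <= 1.
Proof. exact: (@low1_aux (p1 y).+1). Qed.

Lemma I_lb_aux n y : p1 y < n -> y \in lb -> le y c -> forall x, x \in E -> le x y -> x \in lb.
Proof.
elim: n y => // n IH y lyn yL yc x xE xy.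
have yE := lb_in yL.
case: (le_ltP xE yE xy) => [->//|xy'].
have [z [zcov xz]] := lower_cover_above i1 xE yE xy'.
have [a [acov aL]] := lb_lower i1 yL zcov.
have za : z = a by apply: (le1_eq (low1 yL yc)); rewrite lcP.
subst z; have [aE _ ay _] := dcoversP acov.
apply: (IH a) => //; last exact: le_trans (lt_le ay) yc.
exact: leq_trans (ltP1 i1 aE yE ay) lyn.
Qed.

Lemma I_lb x : x \in I -> x \in lb.
Proof. move=> xI; exact: (@I_lb_aux (p1 c).+1 c) (ltnSn _) cL (le_refl _ _ _) x (IE xI) (Ic xI). Qed.

Lemma I_chain x y : x \in I -> y \in I -> le x y || le y x.
Proof. by move=> /I_lb xL /I_lb yL; exact: (lb_chain i1 xL yL). Qed.


Lemma botI : exists2 b, b \in I & forall x, x \in E -> le b x.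
Proof.
have [b bE H] := bot_ex i1 hL; exists b => //.
by rewrite inI bE (H c cE).
Qed.

Lemma I_up u : u \in I -> u != c -> exists w, cov u w /\ w \in Ec.
Proof.
move=> uI nuc; have uE := IE uI.
have nd : ~~ doubly_irr p1 p2 E u.
  apply/negP => du; move/eqP: nuc; apply.
  exact: (le_anti i1 uE cE (Ic uI) (cmin (I_lb uI) du)).
move: nd; rewrite /doubly_irr uE (low1 (I_lb uI) (Ic uI)) andbT -ltnNge.
case/card_gt1P => [w1 [w2 [w1in w2in nw]]].
rewrite ucP in w1in; rewrite ucP in w2in.
have [_ w1E _ _] := dcoversP w1in.
have [_ w2E _ _] := dcoversP w2in.
case/orP: (EcVI w1E) => [w1I|]; last by exists w1.
case/orP: (EcVI w2E) => [w2I|]; last by exists w2.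
exfalso; move/eqP: nw; apply.
case/orP: (I_chain w1I w2I) => h.
  exact: (covers_eq w1in w2in h).
exact: esym (covers_eq w2in w1in h).
Qed.

Lemma ji_I u : u \in I -> (exists z, cov z u) -> join_irr p1 p2 E u.
Proof.
move=> uI [z zu]; apply: (ji_intro (IE uI) zu) => a b au bu.
by apply: (le1_eq (low1 (I_lb uI) (Ic uI))); rewrite lcP.
Qed.

Lemma Ec_least : exists2 d0, d0 \in Ec & forall y, y \in Ec -> le d0 y.
Proof.
have [d0 d0Ec M0] := @ex_minP _ (fun x => x \in Ec) p1 t tEc.
exists d0 => // y yEc.
have P0 : (y \in Ec) && le y y by rewrite yEc le_refl.
have [y0 /andP[y0Ec y0y] M1] := @ex_minP _ (fun x => (x \in Ec) && le x y) p1 y P0.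
have d0E := EcE d0Ec; have y0E := EcE y0Ec; have yE := EcE yEc.
have min0 : forall z, z \in Ec -> le z d0 -> z = d0.
  move=> z zEc zd; apply: i1 => //; first exact: EcE.
  by apply/eqP; rewrite eqn_leq (leP1 zd) (M0 z zEc).
have min1 : forall z, z \in Ec -> le z y0 -> z = y0.
  move=> z zEc zd; have zy : le z y := le_trans zd y0y.
  have := M1 z; rewrite zEc zy => /(_ isT) h.
  apply: i1 => //; first exact: EcE.
  by apply/eqP; rewrite eqn_leq (leP1 zd) h.
case: (boolP (le d0 y0)) => [h|n1]; first exact: le_trans h y0y.
exfalso.
have n2 : ~~ le y0 d0 by apply/negP => h; move: n1; rewrite -(min0 y0 y0Ec h) le_refl.
have d0t : d0 != t.
  by apply/eqP => E0; move: n2; rewrite E0 (le_t y0E).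
have y0t : y0 != t.
  by apply/eqP => E0; move: n1; rewrite E0 (le_t d0E).
have n3 : ~~ le c d0 by apply/negP => /(c_le_Ec d0Ec) E0; rewrite E0 eqxx in d0t.
have n4 : ~~ le c y0 by apply/negP => /(c_le_Ec y0Ec) E0; rewrite E0 eqxx in y0t.
have [b bI Hb] := botI.
have bE := IE bI.
have jd0 : forall x, x \in Ec -> (forall z, z \in Ec -> le z x -> z = x) -> join_irr p1 p2 E x.
  move=> x xEc minx; have xE := EcE xEc.
  have bx : lt b x.
    apply/andP; split; last exact: Hb.
    by apply/eqP => E0; subst x; exact: EcNI xEc bI.
  have [z [zx _]] := lower_cover_above i1 bE xE bx.
  apply: (ji_intro xE zx) => a a' ax a'x.
  have [aE _ axl _] := dcoversP ax.
  have [a'E _ a'xl _] := dcoversP a'x.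
  have aI : a \in I.
    case/orP: (EcVI aE) => // aEc; move: (minx a aEc (lt_le axl)) => E0.
    by subst a; rewrite lt_irr in axl.
  have a'I : a' \in I.
    case/orP: (EcVI a'E) => // aEc; move: (minx a' aEc (lt_le a'xl)) => E0.
    by subst a'; rewrite lt_irr in a'xl.
  case/orP: (I_chain aI a'I) => h; first exact: (covers_eq_low ax a'x h).
  exact: esym (covers_eq_low a'x ax h).
have jc : join_irr p1 p2 E c.
  have bc : lt b c.
    apply/andP; split; last exact: Hb cE.
    by apply/eqP => E0; subst b; move: n3; rewrite (Hb d0 d0E).
  have [z [zc _]] := lower_cover_above i1 bE cE bc.
  have cI : c \in I by rewrite inI cE le_refl.
  by apply: ji_I => //; exists z.
apply: (hsl jc (jd0 d0 d0Ec min0) (jd0 y0 y0Ec min1)).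
- by rewrite /incomp n3 (EcNc d0Ec).
- by rewrite /incomp n1 n2.
- by rewrite /incomp n4 (EcNc y0Ec).
Qed.

Definition phi_spec u v := [/\ v \in Ec, cov u v & forall y, y \in Ec -> le u y -> le v y].

Lemma phi_ex_aux n u : p1 u < n -> u \in I -> exists v, phi_spec u v.
Proof.
have [b bI Hb] := botI.
have [d0 d0Ec Hd0] := Ec_least.
elim: n u => // n IH u lun uI.
have uE := IE uI; have bE := IE bI.
case: (eqVneq u b) => [E0|nub].
  subst u; exists d0; split => //; last by move=> y yEc _; apply: Hd0.
  case: (eqVneq b c) => [E1|nbc].
    subst b; have := c_le_Ec d0Ec (Hb d0 (EcE d0Ec)) => ->; exact: hct.
  have [w [bw wEc]] := I_up bI nbc.
  have dw := Hd0 w wEc.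
  have [_ wE bwl Hw] := dcoversP bw.
  have bd : lt b d0.
    apply/andP; split; last exact: Hb (EcE d0Ec).
    by apply/eqP => E1; subst d0; exact: EcNI d0Ec bI.
  case: (le_ltP (EcE d0Ec) wE dw) => [->//|dw']; exfalso; exact: (Hw d0 (EcE d0Ec) bd dw').
have bu : lt b u by apply/andP; split; [rewrite eq_sym | exact: Hb].
have [u' [u'u bu']] := lower_cover_above i1 bE uE bu.
have [u'E _ u'ul _] := dcoversP u'u.
have u'I : u' \in I by rewrite inI u'E (le_trans (lt_le u'ul) (Ic uI)).
have [v' [v'Ec u'v' Hv']] := IH u' (leq_trans (ltP1 i1 u'E uE u'ul) lun) u'I.
have v'E := EcE v'Ec.
have [v vj] := join_ex hL v'E uE.
have [vE v'v uv Hv] := joinP vj.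
have vEc : v \in Ec := Ec_up v'Ec vE v'v.
exists v; split => //.
  case: (sm_step hS u'v' uE (lt_le u'ul) vj) => // E0.
  by subst v; exfalso; exact: EcNI vEc uI.
move=> y yEc uy; apply: Hv => //; first exact: EcE.
by apply: Hv' => //; exact: le_trans (lt_le u'ul) uy.
Qed.

Lemma phi_ex u : u \in I -> exists v, phi_spec u v.
Proof. exact: (@phi_ex_aux (p1 u).+1). Qed.

Lemma covlt x y : cov x y -> lt x y. Proof. by case/dcoversP. Qed.

Definition phi u := odflt u [pick v | [&& v \in Ec, le u v & [forall y in Ec, le u y ==> le v y]]].

Lemma phiP u : u \in I -> phi_spec u (phi u).
Proof.
move=> uI; have [v [vEc uv Hv]] := phi_ex uI.
rewrite /phi; case: pickP => [w /and3P[wEc uw /forall_inP Hw] | H] /=; last first.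
  move: (H v); rewrite vEc (lt_le (covlt uv)) /=.
  by move/negP; case; apply/forall_inP => y yEc; apply/implyP; apply: Hv.
have E0 : w = v.
  apply: (le_anti i1 (EcE wEc) (EcE vEc)).
    by move/implyP: (Hw v vEc); apply; exact: lt_le (covlt uv).
  exact: Hv.
by subst w; split.
Qed.

Lemma phi_Ec u : u \in I -> phi u \in Ec. Proof. by case/phiP. Qed.
Lemma phi_cov u : u \in I -> cov u (phi u). Proof. by case/phiP. Qed.
Lemma phi_least u y : u \in I -> y \in Ec -> le u y -> le (phi u) y.
Proof. by case/phiP => _ _ H; apply: H. Qed.

Lemma Ec_sub : Ec \subset E. Proof. by apply/subsetP => x /EcE. Qed.

Lemma Ec_meet x y z : x \in Ec -> y \in Ec -> is_meet p1 p2 E x y z -> z \in Ec.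
Proof.
move=> xEc yEc /meetP[zE zx zy H].
case/orP: (EcVI zE) => // zI; exfalso.
have pz : le (phi z) z.
  by apply: H; [exact: EcE (phi_Ec zI) | exact: phi_least | exact: phi_least].
exact: (lt_asym i1 zE (EcE (phi_Ec zI)) (covlt (phi_cov zI)) pz).
Qed.

Lemma sublat : sublattice p1 p2 E Ec.
Proof.
split; first exact: Ec_sub.
move=> x y z xEc yEc; split => h.
  by case/joinP: h => zE xz _ _; exact: Ec_up xEc zE xz.
exact: Ec_meet xEc yEc h.
Qed.

Lemma i1Ec : {in Ec &, injective p1}.
Proof. by move=> x y /EcE xE /EcE yE; apply: i1. Qed.
Lemma i2Ec : {in Ec &, injective p2}.
Proof. by move=> x y /EcE xE /EcE yE; apply: i2. Qed.

Lemma covEc x y : x \in Ec -> y \in Ec -> dcovers p1 p2 Ec x y = cov x y.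
Proof.
move=> xEc yEc; apply/idP/idP => h.
  have [_ _ l H] := dcoversP h.
  apply: dcoversI => //; try exact: EcE.
  move=> z zE xz zy; apply: (H z) => //; exact: Ec_up xEc zE (lt_le xz).
have [_ _ l H] := dcoversP h.
apply: dcoversI => // z zEc; apply: H; exact: EcE.
Qed.

Lemma join_toEc x y u : is_join p1 p2 E x y u -> u \in Ec -> is_join p1 p2 Ec x y u.
Proof.
case/joinP=> uE a b H uEc; apply: joinI => // w wEc; apply: H; exact: EcE.
Qed.

Lemma meet_toEc x y u : is_meet p1 p2 E x y u -> u \in Ec -> is_meet p1 p2 Ec x y u.
Proof.
case/meetP=> uE a b H uEc; apply: meetI => // w wEc; apply: H; exact: EcE.
Qed.

Lemma join_ofEc x y u : x \in Ec -> y \in Ec -> is_join p1 p2 Ec x y u -> is_join p1 p2 E x y u.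
Proof.
move=> xEc yEc hu; have [j hj] := join_ex hL (EcE xEc) (EcE yEc).
have [jE xj yj Hj] := joinP hj.
have jEc := Ec_up xEc jE xj.
have [uEc xu yu Hu] := joinP hu.
suff -> : u = j by [].
apply: (le_anti i1 (EcE uEc) jE); first exact: Hu.
apply: Hj => //; exact: EcE.
Qed.

Lemma latEc : is_lattice p1 p2 Ec.
Proof.
split; first by apply/set0Pn; exists t; exact: tEc.
split => x y xEc yEc.
  have [j hj] := join_ex hL (EcE xEc) (EcE yEc); exists j.
  apply: join_toEc => //; case/joinP: hj => jE xj _ _; exact: Ec_up xEc jE xj.
have [m hm] := meet_ex hL (EcE xEc) (EcE yEc); exists m.
apply: meet_toEc => //; exact: Ec_meet xEc yEc hm.
Qed.

Lemma smEc : semimodular p1 p2 Ec.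
Proof.
move=> x y z u v xy zEc hu hv.
have [xEc yEc _ _] := dcoversP xy.
have hu' := join_ofEc xEc zEc hu.
have hv' := join_ofEc yEc zEc hv.
have [uEc _ _ _] := joinP hu.
have [vEc _ _ _] := joinP hv.
rewrite covEc // in xy.
case: (hS xy (EcE zEc) hu' hv') => [->|h]; [by left | right].
by rewrite covEc.
Qed.

Definition rep x x' := x' = x \/ [/\ x' \in I, le x' x & forall y, y \in Ec -> le x' y -> le x y].

Lemma rep_nle x y x' y' : x \in Ec -> y \in Ec -> ~~ le x y -> rep x x' -> rep y y' -> ~~ le x' y'.
Proof.
move=> xEc yEc nxy [->|[x'I x'x Hx]] [->|[y'I y'y Hy]] //; apply/negP => h.
- by move: (EcNc xEc); rewrite (le_trans h (Ic y'I)).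
- by move: nxy; rewrite (Hx y yEc h).
- by move: nxy; rewrite (Hx y yEc (le_trans h y'y)).
Qed.

Lemma ji_Ec x : x \in Ec -> join_irr p1 p2 Ec x -> exists x', join_irr p1 p2 E x' /\ rep x x'.
Proof.
move=> xEc /andP[_ /eqP h1].
have xE := EcE xEc.
case: (pickP (fun a => cov a x && (a \in I))) => [u /andP[ux uI] | H].
  have px : phi u = x.
    by apply: (covers_eq (phi_cov uI) ux); apply: phi_least => //; exact: lt_le (covlt ux).
  have Hu : forall y, y \in Ec -> le u y -> le x y by move=> y yEc uy; rewrite -px; exact: phi_least.
  exists u; split; last by right; split => //; exact: lt_le (covlt ux).
  have [b bI Hb] := botI.
  case: (eqVneq u b) => [E0|nub].
    exfalso; subst u.
    have : 0 < #|lower_covers p1 p2 Ec x| by rewrite h1.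
    case/card_gt0P => a; rewrite lowerP => ax.
    have [aEc _ _ _] := dcoversP ax; rewrite covEc // in ax.
    have := Hu a aEc (Hb a (EcE aEc)) => xa.
    exact: (lt_asym i1 (EcE aEc) xE (covlt ax) xa).
  have bu : lt b u by apply/andP; split; [rewrite eq_sym | exact: Hb (IE uI)].
  have [z [zu _]] := lower_cover_above i1 (IE bI) (IE uI) bu.
  by apply: ji_I => //; exists z.
exists x; split; last by left.
rewrite /join_irr xE /=; apply/eqP; rewrite -h1; apply: eq_card => a.
rewrite lcP lowerP; apply/idP/idP => ax.
  have [aE _ _ _] := dcoversP ax.
  have aEc : a \in Ec.
    case/orP: (EcVI aE) => // aI; move: (H a); rewrite ax aI //.
  by rewrite covEc.
have [aEc _ _ _] := dcoversP ax.
by rewrite covEc in ax.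
Qed.

Lemma slimEc : slim p1 p2 Ec.
Proof.
move=> x y z jx jy jz /andP[nxy nyx] /andP[nyz nzy] /andP[nxz nzx].
have xEc : x \in Ec by case/andP: jx.
have yEc : y \in Ec by case/andP: jy.
have zEc : z \in Ec by case/andP: jz.
have [x' [jx' rx]] := ji_Ec xEc jx.
have [y' [jy' ry]] := ji_Ec yEc jy.
have [z' [jz' rz]] := ji_Ec zEc jz.
apply: (hsl jx' jy' jz').
- by rewrite /incomp (rep_nle xEc yEc nxy rx ry) (rep_nle yEc xEc nyx ry rx).
- by rewrite /incomp (rep_nle yEc zEc nyz ry rz) (rep_nle zEc yEc nzy rz ry).
- by rewrite /incomp (rep_nle xEc zEc nxz rx rz) (rep_nle zEc xEc nzx rz rx).
Qed.

Lemma ssEc : ssdiagram p1 p2 Ec.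
Proof. by split; [split; [exact: i1Ec | split; [exact: i2Ec | exact: latEc]] | split; [exact: slimEc | exact: smEc]]. Qed.

Lemma card_Ec : #|Ec| = #|E| - #|I|.
Proof.
have sub : I \subset E by apply/subsetP => x /IE.
by rewrite /circ cardsD (setIidPr sub).
Qed.

Lemma cpath_mem a s : a \in E -> path cov a s -> forall x, x \in a :: s -> (x \in E) && le x (last a s).
Proof.
elim: s a => [|y s IH] a aE /=.
  by move=> _ x; rewrite inE => /eqP ->; rewrite aE le_refl.
case/andP=> ay ps x; rewrite inE => /orP[/eqP ->|xs].
  rewrite aE /=; have [_ yE ayl _] := dcoversP ay.
  exact: (le_trans (lt_le ayl) (cpath_le i1 yE ps)).
have [_ yE _ _] := dcoversP ay; exact: IH.
Qed.

Lemma cpath_uniq a s : path cov a s -> uniq (a :: s).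
Proof.
move=> ps; apply: (@sorted_uniq _ (fun x y => p1 x < p1 y)).
- by move=> x y z; apply: ltn_trans.
- by move=> x; rewrite ltnn.
rewrite /=; apply: sub_path ps => x y xy.
have [xE yE l _] := dcoversP xy; exact: (ltP1 i1 xE yE l).
Qed.

Lemma dlength_I : dlength p1 p2 E = #|I|.
Proof.
have [b bI Hb] := botI.
have bE := IE bI.
have cI : c \in I by rewrite inI cE le_refl.
have [s0 ps0 l0] := cpath_ex i1 bE cE (Ic bI).
have h0 : (size s0).+1 <= #|I|.
  have -> : (size s0).+1 = size (b :: s0) by [].
  rewrite -(card_uniqP (cpath_uniq ps0)); apply: subset_leq_card.
  apply/subsetP => x /(cpath_mem bE ps0) /andP[xE]; rewrite l0 => xc.
  by rewrite inI xE.
have ps : path cov b (rcons s0 t) by rewrite rcons_path ps0 l0 hct.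
have ls : last b (rcons s0 t) = t by rewrite last_rcons.
have tI : t \notin I.
  apply/negP => tI; exact: EcNI tEc tI.
have chI : dchain p1 p2 (t |: I).
  apply: dchainI => x y; rewrite !inE => /orP[/eqP->|/andP[xE xc]] /orP[/eqP->|/andP[yE yc]].
  - by rewrite le_refl.
  - by rewrite (le_t yE) orbT.
  - by rewrite (le_t xE).
  - by apply: I_chain; rewrite inI ?xE ?yE.
have subI : t |: I \subset E.
  by apply/subsetP => x; rewrite !inE => /orP[/eqP->|/andP[]//]; exact: tE.
rewrite /dlength; apply/eqP; rewrite -eqSS prednK; last first.
  apply: (leq_trans _ (@leq_bigmax_cond _ (fun S : {set T} => (S \subset E) && dchain p1 p2 S) (fun S => #|S|) (t |: I) (introT andP (conj subI chI)))).
  by rewrite cardsU1 tI.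
rewrite eqn_leq; apply/andP; split.
  apply/bigmax_leqP => S /andP[SE chS].
  have := chain_bound i1 hL hS (ltnSn #|S|) SE chS bE ps.
  rewrite ls size_rcons => H; apply: (leq_trans (H _)) => //.
  move=> x xS; have xE := subsetP SE x xS; by rewrite Hb // le_t.
apply: (leq_trans _ (@leq_bigmax_cond _ (fun S : {set T} => (S \subset E) && dchain p1 p2 S) (fun S => #|S|) (t |: I) (introT andP (conj subI chI)))).
by rewrite cardsU1 tI.
Qed.

Lemma I_neq_Ec u y : u \in I -> y \in Ec -> u != y.
Proof. by move=> uI yEc; apply/eqP => E0; subst y; exact: EcNI yEc uI. Qed.

Lemma Ec_nle_I y u : y \in Ec -> u \in I -> ~~ le y u.
Proof. by move=> yEc uI; apply/negP => yu; move: (EcNc yEc); rewrite (le_trans yu (Ic uI)). Qed.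

Lemma I_p1 u y : u \in I -> y \in Ec -> p1 u < p1 y.
Proof.
move=> uI yEc; have uE := IE uI; have yE := EcE yEc.
case: (boolP (le u y)) => uy.
  by apply: (ltP1 (p2:=p2) i1 uE yE); apply/andP; split => //; exact: (I_neq_Ec uI yEc).
by have [] := lb_right i1 (I_lb uI) yE uy (Ec_nle_I yEc uI).
Qed.

Lemma I_p2 u y : u \in I -> y \in Ec -> (p2 u < p2 y) = le u y.
Proof.
move=> uI yEc; have uE := IE uI; have yE := EcE yEc.
case: (boolP (le u y)) => uy.
  by apply: (ltP2 (p1:=p1) i2 uE yE); apply/andP; split => //; exact: (I_neq_Ec uI yEc).
have [_ h] := lb_right i1 (I_lb uI) yE uy (Ec_nle_I yEc uI).
by apply/negbTE; rewrite -leqNgt; exact: ltnW.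
Qed.

Lemma phi_mono u u' : u \in I -> u' \in I -> le (phi u) (phi u') = le u u'.
Proof.
move=> uI u'I; apply/idP/idP => h; last first.
  apply: phi_least => //; first exact: phi_Ec.
  exact: le_trans h (lt_le (covlt (phi_cov u'I))).
case/orP: (I_chain uI u'I) => // h'.
have uE := IE uI; have u'E := IE u'I.
case: (le_ltP u'E uE h') => [->|l]; first exact: le_refl.
exfalso.
have [_ pE _ H] := dcoversP (phi_cov u'I).
apply: (H u uE l).
apply/andP; split; first exact: (I_neq_Ec uI (phi_Ec u'I)).
exact: le_trans (lt_le (covlt (phi_cov uI))) h.
Qed.

Lemma phi_inj u u' : u \in I -> u' \in I -> phi u = phi u' -> u = u'.
Proof.
move=> uI u'I E0; apply: (le_anti (p2:=p2) i1 (IE uI) (IE u'I)).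
  by rewrite -phi_mono // E0 le_refl.
by rewrite -phi_mono // E0 le_refl.
Qed.

Lemma phi_lb u : u \in I -> phi u \in left_boundary p1 p2 Ec.
Proof.
move=> uI; rewrite inE phi_Ec //=; apply/forall_inP => w wEc; apply/negP => /andP[w1 w2].
have uE := IE uI; have wE := EcE wEc; have pE := EcE (phi_Ec uI).
case: (boolP (le u w)) => uw.
  by move: (leP1 (phi_least uI wEc uw)); rewrite leqNgt w1.
have [_ h] := lb_right i1 (I_lb uI) wE uw (Ec_nle_I wEc uI).
have := leP2 (lt_le (covlt (phi_cov uI))).
move=> h2; have := leq_trans w2 (leq_trans (ltnW h) h2); by rewrite ltnn.
Qed.

Lemma phi_c : phi c = t.
Proof.
have cI : c \in I by rewrite inI cE le_refl.
apply: c_le_Ec; first exact: phi_Ec.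
exact: lt_le (covlt (phi_cov cI)).
Qed.

Lemma lbEc_phi_aux n y : p1 y < n -> y \in left_boundary p1 p2 Ec -> exists2 u, u \in I & y = phi u.
Proof.
have [b bI Hb] := botI.
elim: n y => // n IH y lyn yL.
have yEc := lb_in yL; have yE := EcE yEc.
have pbEc := phi_Ec bI.
have pby : le (phi b) y by apply: phi_least => //; exact: Hb.
case: (le_ltP (EcE pbEc) yE pby) => [<-|l]; first by exists b.
have [z [zy pz]] := lower_cover_above i1 (EcE pbEc) yE l.
have [zE _ zyl _] := dcoversP zy.
have zEc : z \in Ec := Ec_up pbEc zE pz.
have zyEc : dcovers p1 p2 Ec z y by rewrite covEc.
have [a [ayEc aL]] := lb_lower i1Ec yL zyEc.
have [aEc _ ayl _] := dcoversP ayEc.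
have ay : cov a y by rewrite -covEc.
have [u' u'I Eu'] := IH a (leq_trans (ltP1 i1Ec aEc yEc ayl) lyn) aL.
subst a.
have u'E := IE u'I.
have nu'c : u' != c.
  apply/eqP => E0; subst u'; rewrite phi_c in ay.
  have [_ _ tyl _] := dcoversP ay.
  exact: (lt_asym i1 tE yE tyl (le_t yE)).
have u'c : lt u' c by apply/andP; split => //; exact: Ic.
have [u [u'u uc]] := upper_cover_below i1 u'E cE u'c.
have [_ uE u'ul _] := dcoversP u'u.
have uI : u \in I by rewrite inI uE.
exists u => //.
have pu'E := EcE (phi_Ec u'I).
have [j hj] := join_ex hL uE pu'E.
have [jE uj pj Hj] := joinP hj.
have jEc : j \in Ec := Ec_up (phi_Ec u'I) jE pj.
have pu_j : phi u = j.
  apply: (le_anti i1 (EcE (phi_Ec uI)) jE); first exact: phi_least.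
  apply: Hj; first exact: EcE (phi_Ec uI).
    exact: lt_le (covlt (phi_cov uI)).
  apply: phi_least => //; first exact: phi_Ec.
  exact: le_trans (lt_le u'ul) (lt_le (covlt (phi_cov uI))).
have cj : cov (phi u') j.
  case: (sm_step hS u'u pu'E (lt_le (covlt (phi_cov u'I))) hj) => // E0.
  exfalso; rewrite -E0 in uj.
  have [_ _ _ H] := dcoversP (phi_cov u'I).
  apply: (H u uE u'ul); apply/andP; split => //; exact: (I_neq_Ec uI (phi_Ec u'I)).
rewrite pu_j; apply: (covers_eq ay cj).
have jL : j \in left_boundary p1 p2 Ec by rewrite -pu_j; exact: phi_lb.
case/orP: (lb_chain i1Ec yL jL) => // jy.
by rewrite (covers_eq cj ay jy) le_refl.
Qed.

Lemma lbEc_phi y : y \in left_boundary p1 p2 Ec -> exists2 u, u \in I & y = phi u.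
Proof. exact: (@lbEc_phi_aux (p1 y).+1). Qed.

Record good (T : finType) (p1 p2 : T -> nat) (E I Ec : {set T}) (phi : T -> T) : Prop := Good {
  g_i1 : {in E &, injective p1};
  g_i2 : {in E &, injective p2};
  g_split : forall x, (x \in E) = (x \in I) || (x \in Ec);
  g_disj : forall x, x \in I -> x \in Ec -> False;
  g_chain : forall x y, x \in I -> y \in I -> dle p1 p2 x y || dle p1 p2 y x;
  g_lb : forall u, u \in I -> phi u \in left_boundary p1 p2 Ec;
  g_lb_inv : forall y, y \in left_boundary p1 p2 Ec -> exists2 u, u \in I & y = phi u;
  g_mono : forall u u', u \in I -> u' \in I -> dle p1 p2 (phi u) (phi u') = dle p1 p2 u u';
  g_p1 : forall u y, u \in I -> y \in Ec -> p1 u < p1 y;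
  g_p2 : forall u y, u \in I -> y \in Ec -> (p2 u < p2 y) = dle p1 p2 u y;
  g_phi : forall u y, u \in I -> y \in Ec -> dle p1 p2 u y = dle p1 p2 (phi u) y
}.

Lemma main_good : good p1 p2 E I Ec phi.
Proof.
split.
- exact: i1.
- exact: i2.
- move=> x; case: (boolP (x \in E)) => xE; first by rewrite (EcVI xE).
  by apply/esym/negbTE; apply/negP => /orP[/IE|/EcE]; rewrite (negbTE xE).
- by move=> x a b; exact: EcNI b a.
- exact: I_chain.
- exact: phi_lb.
- exact: lbEc_phi.
- exact: phi_mono.
- exact: I_p1.
- exact: I_p2.
- move=> u y uI yEc; apply/idP/idP => h; first exact: phi_least.
  exact: le_trans (lt_le (covlt (phi_cov uI))) h.
Qed.

Lemma main_part1 :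
  [/\ dchain p1 p2 I, I \subset left_boundary p1 p2 E, sublattice p1 p2 E Ec,
      ssdiagram p1 p2 Ec & #|Ec| = #|E| - dlength p1 p2 E].
Proof.
split.
- by apply: dchainI => x y; apply: I_chain.
- by apply/subsetP => x; apply: I_lb.
- exact: sublat.
- exact: ssEc.
- by rewrite card_Ec dlength_I.
Qed.

End Main.

Lemma cmp_lt1 (T : finType) (p1 p2 : T -> nat) (A : {set T}) x y :
  {in A &, injective p1} -> x \in A -> y \in A -> dle p1 p2 x y || dle p1 p2 y x ->
  (p1 x < p1 y) = (x != y) && dle p1 p2 x y.
Proof.
move=> inj xA yA /orP[h|h].
  rewrite h andbT; case: (eqVneq x y) => [->|ne]; first by rewrite ltnn.
  rewrite ltn_neqAle (leP1 h) andbT; apply/eqP => E1; move/eqP: ne; apply; exact: inj E1.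
case: (eqVneq x y) => [->|ne]; first by rewrite ltnn.
have nle : dle p1 p2 x y = false.
  apply/negbTE/negP => h'; move/eqP: ne; apply; apply: inj => //.
  by apply/eqP; rewrite eqn_leq (leP1 h') (leP1 h).
rewrite nle andbF; apply/negbTE; rewrite -leqNgt; exact: leP1 h.
Qed.

Lemma cmp_lt2 (T : finType) (p1 p2 : T -> nat) (A : {set T}) x y :
  {in A &, injective p2} -> x \in A -> y \in A -> dle p1 p2 x y || dle p1 p2 y x ->
  (p2 x < p2 y) = (x != y) && dle p1 p2 x y.
Proof.
move=> inj xA yA /orP[h|h].
  rewrite h andbT; case: (eqVneq x y) => [->|ne]; first by rewrite ltnn.
  rewrite ltn_neqAle (leP2 h) andbT; apply/eqP => E1; move/eqP: ne; apply; exact: inj E1.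
case: (eqVneq x y) => [->|ne]; first by rewrite ltnn.
have nle : dle p1 p2 x y = false.
  apply/negbTE/negP => h'; move/eqP: ne; apply; apply: inj => //.
  by apply/eqP; rewrite eqn_leq (leP2 h') (leP2 h).
rewrite nle andbF; apply/negbTE; rewrite -leqNgt; exact: leP2 h.
Qed.

Lemma swap_lt (T : finType) (p : T -> nat) (A : {set T}) a b :
  {in A &, injective p} -> a \in A -> b \in A -> a != b -> (p a < p b) = ~~ (p b < p a).
Proof.
move=> inj aA bA ne; rewrite ltn_neqAle -leqNgt.
have -> : (p a != p b) by apply/eqP => E1; move/eqP: ne; apply; exact: inj E1.
by [].
Qed.

Lemma good_phi_inj (T : finType) (p1 p2 : T -> nat) (E I Ec : {set T}) (phi : T -> T) :
  good p1 p2 E I Ec phi -> forall u v, u \in I -> v \in I -> phi u = phi v -> u = v.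
Proof.
move=> G u v uI vI E0.
have uE : u \in E by rewrite (g_split G) uI.
have vE : v \in E by rewrite (g_split G) vI.
apply: (le_anti (p2:=p2) (g_i1 G) uE vE).
  by rewrite -(g_mono G) // E0 le_refl.
by rewrite -(g_mono G) // E0 le_refl.
Qed.

Section Uniq.
Variables (T : finType) (p1 p2 : T -> nat) (E I Ec : {set T}) (phi : T -> T).
Variables (T' : finType) (q1 q2 : T' -> nat) (E' I' Ec' : {set T'}) (phi' : T' -> T').
Hypothesis G : good p1 p2 E I Ec phi.
Hypothesis G' : good q1 q2 E' I' Ec' phi'.
Variable g : T -> T'.
Hypothesis gi : {in Ec &, injective g}.
Hypothesis gim : g @: Ec = Ec'.
Hypothesis g1 : {in Ec &, forall x y, (p1 x < p1 y) = (q1 (g x) < q1 (g y))}.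
Hypothesis g2 : {in Ec &, forall x y, (p2 x < p2 y) = (q2 (g x) < q2 (g y))}.

Lemma IinE x : x \in I -> x \in E. Proof. by move=> h; rewrite (g_split G) h. Qed.
Lemma EcinE x : x \in Ec -> x \in E. Proof. by move=> h; rewrite (g_split G) h orbT. Qed.
Lemma I'inE x : x \in I' -> x \in E'. Proof. by move=> h; rewrite (g_split G') h. Qed.
Lemma Ec'inE x : x \in Ec' -> x \in E'. Proof. by move=> h; rewrite (g_split G') h orbT. Qed.

Lemma gEc y : y \in Ec -> g y \in Ec'. Proof. by move=> h; rewrite -gim; apply: imset_f. Qed.

Lemma gm_le x y : x \in Ec -> y \in Ec -> dle p1 p2 x y = dle q1 q2 (g x) (g y).
Proof.
move=> xE yE; rewrite /dle (leqNgt (p1 x)) (leqNgt (p2 x)) (leqNgt (q1 (g x))) (leqNgt (q2 (g x))).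
by rewrite g1 // g2.
Qed.

Lemma gm_left x y : x \in Ec -> y \in Ec -> dleft p1 p2 x y = dleft q1 q2 (g x) (g y).
Proof. by move=> xE yE; rewrite /dleft g1 // g2. Qed.

Lemma gm_lb y : y \in left_boundary p1 p2 Ec -> g y \in left_boundary q1 q2 Ec'.
Proof.
rewrite !inE => /andP[yEc /forall_inP H]; rewrite gEc //=.
apply/forall_inP => w'; rewrite -gim => /imsetP[w wEc ->].
by rewrite -gm_left //; apply: H.
Qed.

Lemma gm_lb_inv y' : y' \in left_boundary q1 q2 Ec' -> exists2 y, y \in left_boundary p1 p2 Ec & y' = g y.
Proof.
rewrite inE => /andP[]; rewrite -{1}gim => /imsetP[y yEc ->] /forall_inP H.
exists y => //; rewrite inE yEc /=; apply/forall_inP => w wEc.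
by rewrite gm_left //; apply: H; exact: gEc.
Qed.

Lemma phiEc u : u \in I -> phi u \in Ec. Proof. by move=> uI; apply: lb_in (g_lb G uI). Qed.
Lemma phi'Ec u : u \in I' -> phi' u \in Ec'. Proof. by move=> uI; apply: lb_in (g_lb G' uI). Qed.

Definition f x := if x \in Ec then g x else odflt (g x) [pick u' in I' | phi' u' == g (phi x)].

Lemma fEc y : y \in Ec -> f y = g y. Proof. by rewrite /f => ->. Qed.

Lemma fI u : u \in I -> f u \in I' /\ phi' (f u) = g (phi u).
Proof.
move=> uI; have nEc : u \notin Ec by apply/negP => h; exact: (g_disj G uI h).
rewrite /f (negbTE nEc).
have [u' u'I E0] := g_lb_inv G' (gm_lb (g_lb G uI)).
case: pickP => [v /andP[vI /eqP ->]|H] //=.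
by move: (H u'); rewrite u'I E0 eqxx.
Qed.

Lemma fI_le u v : u \in I -> v \in I -> dle q1 q2 (f u) (f v) = dle p1 p2 u v.
Proof.
move=> uI vI; have [fuI Eu] := fI uI; have [fvI Ev] := fI vI.
by rewrite -(g_mono G') // Eu Ev -gm_le ?(g_mono G) //; apply: phiEc.
Qed.

Lemma fIEc_le u y : u \in I -> y \in Ec -> dle q1 q2 (f u) (g y) = dle p1 p2 u y.
Proof.
move=> uI yEc; have [fuI Eu] := fI uI.
by rewrite (g_phi G') ?gEc // Eu -gm_le ?phiEc // -(g_phi G uI yEc).
Qed.

Lemma fI_inj u v : u \in I -> v \in I -> f u = f v -> u = v.
Proof.
move=> uI vI E0; apply: (le_anti (p2:=p2) (g_i1 G) (IinE uI) (IinE vI)).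
  by rewrite -fI_le // E0 le_refl.
by rewrite -fI_le // E0 le_refl.
Qed.

Lemma fI_neq u v : u \in I -> v \in I -> (f u != f v) = (u != v).
Proof.
move=> uI vI; apply/negb_inj; rewrite !negbK.
by apply/eqP/eqP => [|->//]; apply: fI_inj.
Qed.

Lemma uniq_sim : similar p1 p2 q1 q2 E E'.
Proof.
exists f; split.
- move=> x y; rewrite !(g_split G) => /orP[xI|xEc] /orP[yI|yEc].
  + exact: fI_inj.
  + rewrite (fEc yEc) => E0; exfalso; have [h _] := fI xI.
    by rewrite E0 in h; exact: (g_disj G' h (gEc yEc)).
  + rewrite (fEc xEc) => E0; exfalso; have [h _] := fI yI.
    by rewrite -E0 in h; exact: (g_disj G' h (gEc xEc)).
  + by rewrite !fEc //; apply: gi.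
- apply/setP => y'; apply/imsetP/idP => [[x xE ->]|y'E].
    move: xE; rewrite (g_split G) => /orP[xI|xEc].
      by have [h _] := fI xI; exact: I'inE.
    by rewrite fEc //; apply: Ec'inE; exact: gEc.
  move: y'E; rewrite (g_split G') => /orP[y'I|y'Ec].
    have [w wL Ew] := gm_lb_inv (g_lb G' y'I).
    have [u uI Eu] := g_lb_inv G wL.
    exists u; first exact: IinE.
    have [fuI Efu] := fI uI.
    by apply: (good_phi_inj G') => //; rewrite Efu -Eu Ew.
  move: (y'Ec); rewrite -gim => /imsetP[y yEc ->].
  by exists y; [exact: EcinE | rewrite fEc].
- move=> x y; rewrite !(g_split G) => /orP[xI|xEc] /orP[yI|yEc].
  + have [fxI _] := fI xI; have [fyI _] := fI yI.
    rewrite (cmp_lt1 (g_i1 G) (IinE xI) (IinE yI) (g_chain G xI yI)).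
    rewrite (cmp_lt1 (g_i1 G') (I'inE fxI) (I'inE fyI) (g_chain G' fxI fyI)).
    by rewrite fI_neq // fI_le.
  + have [fxI _] := fI xI.
    by rewrite (g_p1 G xI yEc) (fEc yEc) (g_p1 G' fxI (gEc yEc)).
  + have [fyI _] := fI yI.
    rewrite (fEc xEc); apply/idP/idP => h.
      by move: (g_p1 G yI xEc); rewrite ltnNge (ltnW h).
    by move: (g_p1 G' fyI (gEc xEc)); rewrite ltnNge (ltnW h).
  + by rewrite !fEc //; apply: g1.
- move=> x y; rewrite !(g_split G) => /orP[xI|xEc] /orP[yI|yEc].
  + have [fxI _] := fI xI; have [fyI _] := fI yI.
    rewrite (cmp_lt2 (g_i2 G) (IinE xI) (IinE yI) (g_chain G xI yI)).
    rewrite (cmp_lt2 (g_i2 G') (I'inE fxI) (I'inE fyI) (g_chain G' fxI fyI)).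
    by rewrite fI_neq // fI_le.
  + have [fxI _] := fI xI.
    by rewrite (g_p2 G xI yEc) (fEc yEc) (g_p2 G' fxI (gEc yEc)) fIEc_le.
  + have [fyI _] := fI yI.
    have nxy : x != y by apply/eqP => E0; subst y; exact: (g_disj G yI xEc).
    have nxy' : f x != f y.
      by rewrite (fEc xEc); apply/eqP => E0; rewrite -E0 in fyI; exact: (g_disj G' fyI (gEc xEc)).
    rewrite (swap_lt (g_i2 G) (EcinE xEc) (IinE yI) nxy).
    have fxE : f x \in E' by rewrite (fEc xEc); apply: Ec'inE; exact: gEc.
    rewrite (swap_lt (g_i2 G') fxE (I'inE fyI) nxy').
    by rewrite (g_p2 G yI xEc) (fEc xEc) (g_p2 G' fyI (gEc xEc)) fIEc_le.
  + by rewrite !fEc //; apply: g2.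
Qed.

End Uniq.

Theorem mainTheorem5 (T : finType) (p1 p2 : T -> nat) (E : {set T}) (c : T) :
  ssdiagram p1 p2 E -> is_cl p1 p2 E c -> coatom p1 p2 E c ->
  [/\ dchain p1 p2 (ideal p1 p2 E c),
      ideal p1 p2 E c \subset left_boundary p1 p2 E,
      sublattice p1 p2 E (circ p1 p2 E c),
      ssdiagram p1 p2 (circ p1 p2 E c) &
      #|circ p1 p2 E c| = #|E| - dlength p1 p2 E] /\
  (forall (T' : finType) (q1 q2 : T' -> nat) (E' : {set T'}) (c' : T'),
        ssdiagram q1 q2 E' -> is_cl q1 q2 E' c' -> coatom q1 q2 E' c' ->
        similar p1 p2 q1 q2 (circ p1 p2 E c) (circ q1 q2 E' c') ->
        similar p1 p2 q1 q2 E E').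
Proof.
move=> [[i1 [i2 hL]] [hsl hS]] [cL cdi cmin] [t [ht hct]].
split; first exact: (main_part1 i1 i2 hL hsl hS cL cmin ht hct).
move=> T' q1 q2 E' c' [[j1 [j2 hL']] [hsl' hS']] [cL' cdi' cmin'] [t' [ht' hct']] [g [gi gim g1 g2]].
exact: (uniq_sim (main_good i1 i2 hL hsl hS cL cmin ht hct)
                 (main_good j1 j2 hL' hsl' hS' cL' cmin' ht' hct') gi gim g1 g2).
Qed.
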